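(* Let $q=2^m\geq 4$ with $m$ a positive integer. Let $\delta\in\mathbb{F}_{q^2}$ and $b\in\mathbb{F}_q^*$ satisfy $b^4\,\mathrm{Tr}_{q^2/q}(\delta)=1$. Then the compositional inverse of $$P(x)=b(x^q+x+\delta)^{q(2q+3)/4}+x$$ over $\mathbb{F}_{q^2}$ is $$P^{-1}(x)=x+b\left(\mathrm{Tr}_{q^2/q}(\delta)^{-1}(x^q+x)^2+\delta^{q+1}\mathrm{Tr}_{q^2/q}(\delta)^{-1}+\delta\right)^{q(2q+3)/4}.$$
   Context: $\mathrm{Tr}_{q^2/q}(y)=y+y^q$. The compositional inverse of a permutation polynomial $f$ of $\mathbb{F}_{Q}$ is the unique polynomial $f^{-1}$ (modulo $x^Q-x$) with $f(f^{-1}(c))=f^{-1}(f(c))=c$ for all $c\in\mathbb{F}_Q$; in particular the statement includes that $P$ permutes $\mathbb{F}_{q^2}$. *)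

(* Defs.v *)
From HB Require Import structures.
From mathcomp Require Import all_boot all_order all_algebra all_field.
Set Implicit Arguments. Unset Strict Implicit. Unset Printing Implicit Defensive.
Import GRing.Theory.
Local Open Scope ring_scope.

Definition trq2q (F : ringType) (q : nat) (y : F) : F := y + y ^+ q.

(* The exponent q(2q+3)/4 (an integer since 4 | q when q = 2^m, m >= 2). *)
Definition eexp (q : nat) : nat := ((q * (2 * q + 3)) %/ 4)%N.

Definition Ppoly (F : fieldType) (q : nat) (b delta : F) (x : F) : F :=
  b * (x ^+ q + x + delta) ^+ eexp q + x.

Definition Pinv (F : fieldType) (q : nat) (b delta : F) (x : F) : F :=
  x + b * ((trq2q q delta)^-1 * (x ^+ q + x) ^+ 2
           + delta ^+ q.+1 * (trq2q q delta)^-1 + delta) ^+ eexp q.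

(* Main.v *)
Require Import Defs.
From HB Require Import structures.
From mathcomp Require Import all_boot all_order all_algebra all_field.
From mathcomp Require Import ring.
Import GRing.Theory.
Local Open Scope ring_scope.

Lemma add2 {F : fieldType} (h2 : 2%:R = 0 :> F) (a : F) : a + a = 0.
Proof. by rewrite -mulr2n -mulr_natr h2 mulr0. Qed.

Lemma sqrD2 {F : fieldType} (h2 : 2%:R = 0 :> F) (a c : F) :
  (a + c) ^+ 2 = a ^+ 2 + c ^+ 2.
Proof. by rewrite sqrrD -mulr_natr h2 mulr0 addr0. Qed.

Lemma frob2 {F : fieldType} (h2 : 2%:R = 0 :> F) k (a c : F) :
  (a + c) ^+ (2 ^ k) = a ^+ (2 ^ k) + c ^+ (2 ^ k).
Proof.
elim: k => [|k IH]; first by rewrite expn0 !expr1.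
by rewrite expnS mulnC !exprM IH sqrD2.
Qed.

Lemma sq_inj {F : fieldType} (h2 : 2%:R = 0 :> F) (a c : F) :
  a ^+ 2 = c ^+ 2 -> a = c.
Proof.
move=> h; apply/eqP; rewrite -subr_eq0.
have: (a - c) ^+ 2 == 0 by rewrite sqrrB h -mulr_natr h2 mulr0 subr0 add2.
by rewrite expf_eq0.
Qed.

Lemma eq2 {F : fieldType} (h2 : 2%:R = 0 :> F) (a c k : F) :
  a = c + 2%:R * k -> a = c.
Proof. by rewrite h2 mul0r addr0. Qed.

Lemma core {F : fieldType} (q e : nat) (h2 : 2%:R = 0 :> F)
  (hfD : forall a c : F, (a + c) ^+ q = a ^+ q + c ^+ q)
  (hqq : forall a : F, a ^+ q ^+ q = a)
  (he : (e * 4 = q * q * 2 + q * 3)%N)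
  (b T y : F) (hbT : b ^+ 4 * T = 1) (hy : y ^+ q = y + T) :
  (b * (y ^+ e + y ^+ e ^+ q)) ^+ 2 = y * y ^+ q.
Proof.
apply: (sq_inj h2).
have h4 : forall a c : F, (a + c) ^+ 4 = a ^+ 4 + c ^+ 4.
  by move=> a c; have := frob2 h2 2 a c.
have hz : y ^+ e ^+ 4 = y ^+ 2 * (y ^+ q) ^+ 3.
  by rewrite -exprM he exprD !exprM hqq.
have hzq : y ^+ e ^+ q ^+ 4 = (y ^+ q) ^+ 2 * y ^+ 3.
  by rewrite exprAC hz exprMn [(y ^+ 2) ^+ q]exprAC [((y ^+ q) ^+ 3) ^+ q]exprAC hqq.
rewrite -exprM /= exprMn h4 hz hzq.
set yq := y ^+ q.
have hs : y + yq = T by rewrite /yq hy addrA add2 // add0r.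
transitivity (b ^+ 4 * (y ^+ 2 * yq ^+ 2 * (y + yq))); first by ring.
by rewrite hs mulrCA hbT mulr1 exprMn.
Qed.

Lemma key1 {F : fieldType} (h2 : 2%:R = 0 :> F) (s d dq Ti T : F)
  (hT : T = d + dq) (hTi : Ti * T = 1) :
  Ti * ((s + d) * (s + dq) + s ^+ 2) + d * dq * Ti + d = s + d.
Proof.
transitivity (s * (Ti * T) + d + 2%:R * (Ti * s ^+ 2 + d * dq * Ti)).
  by rewrite hT; ring.
by rewrite hTi h2 mul0r addr0 mulr1.
Qed.

Lemma key2 {F : fieldType} (h2 : 2%:R = 0 :> F) (s d dq Ti T A : F)
  (hT : T = d + dq) (hTi : Ti * T = 1) (hA : A = Ti * s ^+ 2 + d * dq * Ti) :
  (A + d) * (A + dq) = (A + s) ^+ 2.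
Proof.
transitivity ((A + s) ^+ 2 + (Ti * T - 1) * (s ^+ 2 + d * dq)
   + 2%:R * (d * dq - A * s)).
  by rewrite hT hA; ring.
by rewrite hTi subrr h2 !mul0r !addr0.
Qed.

Theorem theorem3p3 (m : nat) (F : finFieldType)
  (hm : (2 <= m)%N) (hF : #|F| = ((2 ^ m) ^ 2)%N)
  (delta b : F) (hbq : b ^+ (2 ^ m) = b) (hb0 : b != 0)
  (htr : b ^+ 4 * trq2q (2 ^ m) delta = 1) :
  bijective (Ppoly (2 ^ m) b delta) /\
  cancel (Ppoly (2 ^ m) b delta) (Pinv (2 ^ m) b delta) /\
  cancel (Pinv (2 ^ m) b delta) (Ppoly (2 ^ m) b delta).
Proof.
have h2 : 2%:R = 0 :> F.
  apply: pcharf0; apply: (@card_finPcharP F 2 (m * 2)) => //.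
  by rewrite hF -expnM.
move: hbq htr; rewrite /Ppoly /Pinv; set q := (2 ^ m)%N => hbq htr.
have hqq : forall a : F, a ^+ q ^+ q = a.
  by move=> a; rewrite -exprM mulnn -hF expf_card.
have hfD : forall a c : F, (a + c) ^+ q = a ^+ q + c ^+ q := frob2 h2 m.
set e := eexp q.
have he : (e * 4 = q * q * 2 + q * 3)%N.
  rewrite /e /eexp divnK; first by rewrite mulnDr mulnA; ring.
  apply: dvdn_mulr; exact: (dvdn_exp2l 2 hm).
set T := trq2q q delta in htr *.
have hT : T = delta + delta ^+ q by [].
have hT0 : T != 0.
  by apply/eqP => h0; move: htr; rewrite h0 mulr0 => /eqP; rewrite eq_sym oner_eq0.
set Ti := T^-1.
have hTi : Ti * T = 1 by rewrite /Ti mulVf.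
have hTq : T ^+ q = T by rewrite hT hfD hqq addrC.
have c1 : cancel (fun x => b * (x ^+ q + x + delta) ^+ e + x)
   (fun x => x + b * (Ti * (x ^+ q + x) ^+ 2 + delta ^+ q.+1 * Ti + delta) ^+ e).
  move=> x /=.
  set y := x ^+ q + x + delta.
  set z := y ^+ e.
  have hyq' : y ^+ q = (x ^+ q + x) + delta ^+ q.
    by rewrite /y !hfD hqq; ring.
  have hy : y ^+ q = y + T.
    by rewrite hyq' /y hT; apply: (eq2 h2 _ _ (- delta)); ring.
  have hc := core _ _ h2 hfD hqq he _ _ _ htr hy.
  have hin : Ti * ((b * z + x) ^+ q + (b * z + x)) ^+ 2 + delta ^+ q.+1 * Ti + delta = y.
    rewrite hfD exprMn hbq.
    rewrite (_ : b * z ^+ q + x ^+ q + (b * z + x) = b * (z + z ^+ q) + (x ^+ q + x));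
      last by ring.
    rewrite sqrD2 // hc hyq' [delta ^+ q.+1]exprS /y.
    exact: key1 h2 (x ^+ q + x) delta (delta ^+ q) Ti T hT hTi.
  by rewrite hin -/z addrAC add2 // add0r.
have c2 : cancel
   (fun x => x + b * (Ti * (x ^+ q + x) ^+ 2 + delta ^+ q.+1 * Ti + delta) ^+ e)
   (fun x => b * (x ^+ q + x + delta) ^+ e + x).
  move=> v /=.
  set s := v ^+ q + v.
  set A := Ti * s ^+ 2 + delta ^+ q.+1 * Ti.
  set w := A + delta.
  set z := w ^+ e.
  have hs : s ^+ q = s by rewrite /s hfD hqq addrC.
  have hAq : A ^+ q = A.
    rewrite /A hfD !exprMn /Ti exprVn hTq hs -expr2.
    rewrite [delta ^+ q.+1 ^+ q]exprAC [(delta ^+ q) ^+ q.+1]exprS hqq.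
    by rewrite [delta ^+ q.+1]exprS [delta ^+ q * delta]mulrC.
  have hwq' : w ^+ q = A + delta ^+ q by rewrite /w hfD hAq.
  have hwq : w ^+ q = w + T.
    by rewrite hwq' /w hT; apply: (eq2 h2 _ _ (- delta)); ring.
  have hc := core _ _ h2 hfD hqq he _ _ _ htr hwq.
  have hbz : b * (z + z ^+ q) = A + s.
    apply: (sq_inj h2); rewrite hc hwq' /w.
    apply: (key2 h2 s delta (delta ^+ q) Ti T A hT hTi).
    by rewrite /A [delta ^+ q.+1]exprS.
  have hin : (v + b * z) ^+ q + (v + b * z) + delta = w.
    rewrite hfD exprMn hbq.
    rewrite (_ : v ^+ q + b * z ^+ q + (v + b * z) + delta = s + b * (z + z ^+ q) + delta);
      last by rewrite /s; ring.
    rewrite hbz /w; apply: (eq2 h2 _ _ s); ring.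
  by rewrite hin -/z addrCA add2 // addr0.
split; first exact: (Bijective c1 c2).
by split.
Qed.
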